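(* The largest integer $k$ with $1\leq k\leq n$ and $S(k)=0$ is $k=\lfloor\vartheta^+(G)\rfloor$.
   Context: Let $G$ be a simple graph with vertex set $V=\{1,\dots,n\}$, edge set $E$ and adjacency matrix $A$. Let $e$ be the all-ones vector, $\langle M,N\rangle=\operatorname{trace}(M^TN)$, and $X\geq 0$ mean entrywise nonnegativity. For real $t$ with $1\leq t\leq n$, $Q(t)$ is the semidefinite program $$\min \tfrac12\langle A,X\rangle\ \text{ s.t. } X\succeq 0,\ X\geq 0,\ \operatorname{trace}(X)=t,\ Xe=t\operatorname{diag}(X)$$ over symmetric $n\times n$ matrices $X$, and $S(t)$ denotes its optimal value. Schrijver's number is $$\vartheta^+(G)=\max\ \operatorname{trace}(X)\ \text{ s.t. } X-xx^T\succeq 0,\ \operatorname{diag}(X)=x,\ X_{i,j}=0\ \forall [i,j]\in E,\ X\geq 0.$$ *)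

(* Defs.v *)
From HB Require Import structures.
From mathcomp Require Import all_boot all_order all_algebra.
From mathcomp Require Import classical_sets reals.
Set Implicit Arguments. Unset Strict Implicit. Unset Printing Implicit Defensive.
Import Order.TTheory GRing.Theory Num.Theory.
Local Open Scope ring_scope.
Local Open Scope classical_set_scope.

Section Defs.
Variables (R : realType) (n : nat).

Definition adjmx (adj : rel 'I_n) : 'M[R]_n := \matrix_(i, j) (adj i j)%:R.

Definition psd (X : 'M[R]_n) : Prop :=
  X^T = X /\ forall v : 'cV[R]_n, 0 <= (v^T *m X *m v) 0 0.

Definition nonneg_mx (X : 'M[R]_n) : Prop := forall i j, 0 <= X i j.

Definition frob (M N : 'M[R]_n) : R := \tr (M^T *m N).

Definition ones : 'cV[R]_n := const_mx 1.

Definition diagv (X : 'M[R]_n) : 'cV[R]_n := \col_i X i i.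

Definition feasQ (t : R) : set 'M[R]_n :=
  [set X | [/\ X^T = X, psd X, nonneg_mx X, \tr X = t & X *m ones = t *: diagv X]].

Definition Sval (adj : rel 'I_n) (t : R) : R :=
  inf [set (2%:R)^-1 * frob (adjmx adj) X | X in feasQ t].

Definition feasTheta (adj : rel 'I_n) : set ('M[R]_n * 'cV[R]_n) :=
  [set p | let X := p.1 in let x := p.2 in
     [/\ psd (X - x *m x^T), diagv X = x,
         (forall i j, adj i j -> X i j = 0) & nonneg_mx X]].

Definition theta_plus (adj : rel 'I_n) : R :=
  sup [set \tr p.1 | p in feasTheta adj].

End Defs.

(* Main.v *)
Require Import Defs.
From HB Require Import structures.
From mathcomp Require Import all_boot all_order all_algebra.
From mathcomp Require Import classical_sets reals.
From mathcomp Require Import boolp topology normedtype derive.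
From mathcomp Require Import ring lra zify.
Set Implicit Arguments. Unset Strict Implicit. Unset Printing Implicit Defensive.
Import Order.TTheory GRing.Theory Num.Theory.
Import numFieldNormedType.Exports.
Local Open Scope ring_scope.
Local Open Scope classical_set_scope.


Section Top.
Variable (R : realType).

Lemma cont_sum (T : topologicalType) (I : Type) (r : seq I) (f : I -> T -> R) :
  (forall i, continuous (f i)) -> continuous (fun x => \sum_(i <- r) f i x).
Proof.
move=> H; elim: r => [|a r IH].
  under eq_fun do rewrite big_nil; exact: cst_continuous.
under eq_fun do rewrite big_cons.
move=> x; apply: (@continuousD _ _ _ (f a) (fun x => \sum_(i <- r) f i x)).
  exact: H.
exact: IH.
Qed.

Lemma cont_lin n (c : 'I_n -> 'I_n -> R) :
  continuous (fun X : 'M[R]_(n,n) => \sum_i \sum_j c i j * X i j).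
Proof.
apply: cont_sum => i; apply: cont_sum => j x.
apply: (@continuousM _ _ (fun=> c i j) (fun X : 'M[R]_(n,n) => X i j)).
  exact: cst_continuous.
exact: coord_continuous.
Qed.

Lemma closed_eqf (T : topologicalType) (f g : T -> R) :
  continuous f -> continuous g -> closed [set x | f x = g x].
Proof.
move=> cf cg.
have -> : [set x | f x = g x] = (fun x => f x - g x) @^-1` [set y | y = 0].
  by rewrite predeqE => x /=; split => [->|/eqP]; [rewrite subrr|rewrite subr_eq0 => /eqP].
apply: preimage_closed; last exact: closed_eq.
move=> x _; apply: (@continuousB _ _ _ f g); [exact: cf|exact: cg].
Qed.

Lemma closed_gef (T : topologicalType) (f : T -> R) :
  continuous f -> closed [set x | 0 <= f x].
Proof.
move=> cf.
have -> : [set x | 0 <= f x] = f @^-1` [set y | 0 <= y] by [].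
apply: preimage_closed; last exact: closed_ge.
by move=> x _; exact: cf.
Qed.

Lemma closed_all (T : topologicalType) (I : Type) (P : I -> set T) :
  (forall i, closed (P i)) -> closed [set x | forall i, P i x].
Proof.
move=> H.
have -> : [set x | forall i, P i x] = \bigcap_(i in setT) P i.
  by rewrite predeqE => x; split => [Hx i _|Hx i]; [exact: Hx|exact: Hx].
by apply: closed_bigI => i _; exact: H.
Qed.

Lemma closed_imp (T : topologicalType) (b : bool) (P : set T) :
  closed P -> closed [set x | b -> P x].
Proof.
case: b => H.
  have -> : [set x | true -> P x] = P.
    by rewrite predeqE => x; split => [/(_ isT)|Px _].
  exact: H.
have -> : [set x : T | false -> P x] = setT by rewrite predeqE => x; split.
exact: closedT.
Qed.
End Top.

Section T.
Variable (R : realType).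

Lemma vec_mx_cont n : continuous (fun v : 'rV[R]_(n * n) => (vec_mx v : 'M[R]_(n,n))).
Proof.
move=> /= v s /= /(nbhs_ballP (vec_mx v)) [e e0 es].
apply/nbhs_ballP; exists e => //= w [_ vw]; apply: es; split=>// i j; rewrite !mxE; exact: vw.
Qed.

Lemma mx_compact n (A : set 'M[R]_(n,n)) (c : R) :
  closed A -> (forall X, A X -> forall i j, `|X i j| <= c) -> compact A.
Proof.
move=> Acl Ab.
pose B := (fun v : 'rV[R]_(n*n) => vec_mx v) @^-1` A.
have -> : A = (fun v : 'rV[R]_(n*n) => vec_mx v) @` B.
  rewrite predeqE => X; split.
    by move=> AX; exists (mxvec X); rewrite /B /= mxvecK.
  by move=> [v Bv <-].
apply: continuous_compact.
  by apply: continuous_subspaceT => v; exact: vec_mx_cont.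
have Mnco : compact [set v : 'rV[R]_(n*n) | forall i, `[(- c), c]%classic (v ord0 i)].
  by apply: (@rV_compact R (n*n) (fun=> `[(- c), c]%classic)) => _; apply: segment_compact.
apply: subclosed_compact _ Mnco _.
  by apply: preimage_closed => // v _; exact: vec_mx_cont.
move=> v /= Bv i; rewrite in_itv /= -ler_norml.
case/mxvec_indexP: i => i j.
have := Ab _ Bv i j; rewrite mxE.
by have -> : (ord0 : 'I_1) = 0 by [].
Qed.
End T.

Section Alg.
Variables (R : realType) (n : nat).
Implicit Types (W : 'M[R]_n) (u v : 'cV[R]_n).

Definition qf (W : 'M[R]_n) (u v : 'cV[R]_n) : R := (u^T *m W *m v) 0 0.

Lemma qf_sum W u v : qf W u v = \sum_i \sum_j (u i 0 * v j 0) * W i j.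
Proof.
rewrite /qf mxE; under eq_bigr do rewrite mxE big_distrl /=.
rewrite exchange_big /=; apply: eq_bigr => i _; apply: eq_bigr => j _.
by rewrite !mxE; ring.
Qed.

Lemma qfDl W u u' v : qf W (u + u') v = qf W u v + qf W u' v.
Proof. by rewrite /qf linearD /= !mulmxDl mxE. Qed.
Lemma qfDr W u v v' : qf W u (v + v') = qf W u v + qf W u v'.
Proof. by rewrite /qf mulmxDr mxE. Qed.
Lemma qfZl W a u v : qf W (a *: u) v = a * qf W u v.
Proof. by rewrite /qf linearZ /= -!scalemxAl mxE. Qed.
Lemma qfZr W a u v : qf W u (a *: v) = a * qf W u v.
Proof. by rewrite /qf -scalemxAr mxE. Qed.
Lemma qfDm W W' u v : qf (W + W') u v = qf W u v + qf W' u v.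
Proof. by rewrite /qf mulmxDr mulmxDl mxE. Qed.
Lemma qfZm W a u v : qf (a *: W) u v = a * qf W u v.
Proof. by rewrite /qf -scalemxAr -scalemxAl mxE. Qed.
Lemma qfNm W u v : qf (- W) u v = - qf W u v.
Proof. by rewrite -scaleN1r qfZm mulN1r. Qed.

Lemma qf_sym W u v : W^T = W -> qf W u v = qf W v u.
Proof.
move=> sW; rewrite /qf.
have -> : (u^T *m W *m v) 0 0 = ((u^T *m W *m v)^T) 0 0 by rewrite [in RHS]mxE.
by rewrite !trmx_mul trmxK sW mulmxA.
Qed.

Lemma qf_delta W i j : qf W (delta_mx i 0) (delta_mx j 0) = W i j.
Proof.
rewrite qf_sum (bigD1 i) //=.
have -> : \sum_(k | k != i) \sum_l (@delta_mx R n 1 i 0 k 0 * @delta_mx R n 1 j 0 l 0) * W k l = 0 :> R.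
  apply: big1 => k ki; apply: big1 => l _; rewrite !mxE (negbTE ki) /=; ring.
rewrite addr0 (bigD1 j) //=.
have -> : \sum_(l | l != j) (@delta_mx R n 1 i 0 i 0 * @delta_mx R n 1 j 0 l 0) * W i l = 0 :> R.
  apply: big1 => l lj; rewrite !mxE (negbTE lj) /=; ring.
by rewrite !mxE !eqxx /=; ring.
Qed.

Lemma psd_qf W v : psd W -> 0 <= qf W v v.
Proof. by case=> _ H; exact: H. Qed.

Lemma psd_diag W i : psd W -> 0 <= W i i.
Proof. by move=> /((@psd_qf W (delta_mx i 0))); rewrite qf_delta. Qed.

Lemma psd_off W i j : psd W -> 2 * W i j <= W i i + W j j.
Proof.
move=> pW; have := @psd_qf W (delta_mx i 0 - delta_mx j 0) pW.
have sW : W^T = W by case: pW.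
rewrite -scaleN1r !(qfDl, qfDr, qfZl, qfZr) !qf_delta.
have -> : W j i = W i j by rewrite -[in LHS]sW mxE.
lra.
Qed.

Lemma quad_disc (a b c : R) : 0 <= c -> (forall l, 0 <= a + 2 * l * b + l ^+ 2 * c) -> b ^+ 2 <= a * c.
Proof.
move=> c0 H; have [cpos|] := ltrP 0 c.
  have := H (- b / c).
  have -> : a + 2 * (- b / c) * b + (- b / c) ^+ 2 * c = (a * c - b ^+ 2) / c.
    by field; rewrite gt_eqF.
  by rewrite pmulr_lge0 ?invr_gt0 // subr_ge0.
move=> c0'; have c00 : c = 0 by apply/eqP; rewrite eq_le c0' c0.
rewrite c00 mulr0; have [b0|bn0] := eqVneq b 0; first by rewrite b0 expr2 mulr0.
have := H (- (a + 1) / (2 * b)).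
have -> : a + 2 * (- (a + 1) / (2 * b)) * b + (- (a + 1) / (2 * b)) ^+ 2 * c = -1.
  by rewrite c00; field; rewrite bn0.
lra.
Qed.

Lemma psd_CS W u v : psd W -> qf W u v ^+ 2 <= qf W u u * qf W v v.
Proof.
move=> pW; have sW : W^T = W by case: pW.
apply: quad_disc; first exact: psd_qf.
move=> l; have := @psd_qf W (u + l *: v) pW.
rewrite !(qfDl, qfDr, qfZl, qfZr) (qf_sym v u sW).
congr (_ <= _); ring.
Qed.
End Alg.


Section Main.
Variables (R : realType) (n : nat) (adj : rel 'I_n).
Hypothesis adj_irr : irreflexive adj.
Implicit Types (W X : 'M[R]_n) (u v d : 'cV[R]_n).
Local Notation e := (ones R n).

Definition sm W := qf W e e.
Definition Fset : set 'M[R]_n :=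
  [set W | [/\ psd W, nonneg_mx W, (forall i j, adj i j -> W i j = 0) & \tr W = 1]].

Lemma onesE i j : e i j = 1. Proof. by rewrite /ones mxE. Qed.
Lemma trE W : \tr W = \sum_i W i i. Proof. by []. Qed.

Lemma sm_sum W : sm W = \sum_i \sum_j W i j.
Proof.
rewrite /sm qf_sum; apply: eq_bigr => i _; apply: eq_bigr => j _.
by rewrite !onesE; ring.
Qed.

Lemma sum_delta (f : 'I_n -> R) i : \sum_a (a == i)%:R * f a = f i.
Proof.
rewrite (bigD1 i) //= big1 ?addr0 => [|a ai]; first by rewrite eqxx mul1r.
by rewrite (negbTE ai) mul0r.
Qed.

Lemma diag_le_tr W i : psd W -> W i i <= \tr W.
Proof.
move=> pW; rewrite trE (bigD1 i) //= lerDl; apply: sumr_ge0 => a _.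
exact: psd_diag.
Qed.

Lemma entry_bound W : psd W -> nonneg_mx W -> forall i j, `|W i j| <= \tr W.
Proof.
move=> pW nW i j; rewrite ger0_norm //.
have := psd_off i j pW; have := diag_le_tr i pW; have := diag_le_tr j pW; lra.
Qed.

Lemma sm_le W : psd W -> sm W <= n%:R * \tr W.
Proof.
move=> pW.
have H : \sum_i \sum_j W i j <= \sum_i \sum_j (W i i / 2 + W j j / 2).
  apply: ler_sum => i _; apply: ler_sum => j _; have := psd_off i j pW; lra.
rewrite sm_sum (le_trans H) //.
have -> : \sum_i \sum_j (W i i / 2 + W j j / 2) = \sum_i (W i i / 2 *+ n + \tr W / 2).
  apply: eq_bigr => i _; rewrite big_split /= sumr_const card_ord -mulr_suml //.
rewrite big_split /= sumr_const card_ord sumrMnl -mulr_suml -trE.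
by rewrite -mulrnDl -splitr mulr_natl.
Qed.

Lemma mulmx_onesE X i k : (X *m e) i k = \sum_j X i j.
Proof. by rewrite mxE; apply: eq_bigr => j _; rewrite onesE mulr1. Qed.

Lemma closed_psd : closed [set W : 'M[R]_n | psd W].
Proof.
have -> : [set W : 'M[R]_n | psd W] =
    [set W : 'M[R]_n | forall i j, W j i = W i j] `&` [set W | forall v, 0 <= qf W v v].
  rewrite predeqE => W; split => [[sW H]|[H1 H2]]; split => //.
    by move=> i j; rewrite -[in RHS]sW mxE.
  by apply/matrixP => i j; rewrite mxE; exact: H1.
apply: closedI.
  apply: closed_all => i; apply: closed_all => j; apply: closed_eqf;
  exact: coord_continuous.
apply: closed_all => v; apply: closed_gef.
have -> : (fun W => qf W v v) = (fun W => \sum_i \sum_j (v i 0 * v j 0) * W i j).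
  by apply/funext => W; rewrite qf_sum.
exact: cont_lin.
Qed.

Lemma cont_tr : continuous (fun W : 'M[R]_n => \tr W).
Proof. by apply: cont_sum => i; exact: coord_continuous. Qed.

Lemma cont_sm : continuous sm.
Proof.
have -> : sm = (fun W => \sum_i \sum_j 1 * W i j).
  apply/funext => W; rewrite sm_sum; apply: eq_bigr => i _; apply: eq_bigr => j _.
  by rewrite mul1r.
exact: cont_lin.
Qed.

Lemma closed_nonneg : closed [set W : 'M[R]_n | nonneg_mx W].
Proof.
apply: closed_all => i; apply: closed_all => j; apply: closed_gef.
exact: coord_continuous.
Qed.

Lemma closed_F : closed Fset.
Proof.
have -> : Fset = [set W | psd W] `&` ([set W | nonneg_mx W] `&`
   ([set W : 'M[R]_n | forall i j, adj i j -> W i j = 0] `&` [set W : 'M[R]_n | \tr W = 1])).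
  by rewrite predeqE => W; split => [[? ? ? ?]|[? [? [? ?]]]].
apply: closedI; first exact: closed_psd.
apply: closedI; first exact: closed_nonneg.
apply: closedI.
  apply: closed_all => i; apply: closed_all => j; apply: closed_imp.
  apply: closed_eqf; [exact: coord_continuous|exact: cst_continuous].
apply: closed_eqf; [exact: cont_tr|exact: cst_continuous].
Qed.

Lemma closed_Q (t : R) : closed (@feasQ R n t).
Proof.
have -> : @feasQ R n t = [set X | psd X] `&` ([set X | nonneg_mx X] `&`
   ([set X : 'M[R]_n | forall i, \sum_j X i j = t * X i i] `&` [set X : 'M[R]_n | \tr X = t])).
  rewrite predeqE => X; split.
    case=> sX pX nX tX eX; split => //; split => //; split => // i.
    have := congr1 (fun M : 'cV[R]_n => M i 0) eX; rewrite mulmx_onesE => ->.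
    by rewrite !mxE.
  case=> pX [nX [eX tX]]; split => //; first by case: pX.
  apply/matrixP => i k; rewrite ord1 mulmx_onesE eX !mxE //.
apply: closedI; first exact: closed_psd.
apply: closedI; first exact: closed_nonneg.
apply: closedI.
  apply: closed_all => i; apply: closed_eqf.
    by apply: cont_sum => j; exact: coord_continuous.
  move=> x; apply: (@continuousM _ _ (fun=> t) (fun X : 'M[R]_n => X i i)).
    exact: cst_continuous.
  exact: coord_continuous.
apply: closed_eqf; [exact: cont_tr|exact: cst_continuous].
Qed.

Lemma qf_outer u w v v' : qf (u *m w^T) v v' = (v^T *m u) 0 0 * (w^T *m v') 0 0.
Proof.
rewrite /qf mulmxA -[_ *m w^T *m v']mulmxA mxE big_ord1.
by have -> : (0 : 'I_1) = ord0 by [].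
Qed.

Lemma tr_sq u v : (v^T *m u) 0 0 = (u^T *m v) 0 0.
Proof.
have -> : (v^T *m u) 0 0 = ((v^T *m u)^T) 0 0 by rewrite [in RHS]mxE.
by rewrite trmx_mul trmxK.
Qed.

Lemma psd_outer u : psd (u *m u^T).
Proof.
split; first by rewrite trmx_mul trmxK.
move=> v; change (0 <= qf (u *m u^T) v v); rewrite qf_outer tr_sq.
by rewrite -expr2 sqr_ge0.
Qed.

Lemma F_delta i : Fset (delta_mx i i).
Proof.
split.
- rewrite -[delta_mx i i](mul_delta_mx (0 : 'I_1)) -[X in _ *m X]trmx_delta.
  exact: psd_outer.
- by move=> a b; rewrite mxE ler0n.
- move=> a b ab; rewrite mxE.
  case: eqP => [ai|]; case: eqP => [bi|] //=.
  by move: ab; rewrite ai bi adj_irr.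
- rewrite trE.
  have -> : \sum_a (delta_mx i i : 'M[R]_n) a a = \sum_a (a == i)%:R * 1.
    by apply: eq_bigr => a _; rewrite mxE andbb mulr1.
  by rewrite sum_delta.
Qed.

Lemma sm_delta i : sm (delta_mx i i) = 1.
Proof.
rewrite sm_sum.
have -> : \sum_a \sum_b (delta_mx i i : 'M[R]_n) a b = \sum_a (a == i)%:R * 1.
  apply: eq_bigr => a _; rewrite mulr1.
  have [->|ai] := eqVneq a i.
    have -> : \sum_b (delta_mx i i : 'M[R]_n) i b = \sum_b (b == i)%:R * 1.
      by apply: eq_bigr => b _; rewrite mxE eqxx mulr1.
    by rewrite sum_delta.
  by apply: big1 => b _; rewrite mxE (negbTE ai).
by rewrite sum_delta.
Qed.

Lemma exists_max : (0 < n)%N ->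
  exists2 W, Fset W & forall W', Fset W' -> sm W' <= sm W.
Proof.
move=> hn; set i0 : 'I_n := Ordinal hn.
have ne : Fset !=set0 by exists (delta_mx i0 i0); exact: F_delta.
have cpt : compact Fset.
  apply: (@mx_compact R n Fset 1 closed_F) => W [pW nW _ tW] i j.
  by rewrite -tW; exact: entry_bound.
have [c cF cmax] := compact_EVT_max ne cpt (continuous_subspaceT cont_sm).
exists c; first by rewrite inE in cF.
by move=> W' FW'; apply: cmax; rewrite inE.
Qed.
End Main.


Lemma fo_real (R : realType) (c b : R) :
  (forall h, -1/2 <= h <= 1/2 -> 2 * h * c + h ^+ 2 * b <= 0) -> c = 0.
Proof.
move=> H; apply/eqP; apply/negPn/negP => c0.
set K := `|b| + `|c| + 1.
have Kpos : 0 < K by rewrite /K; have := normr_ge0 b; have := normr_ge0 c; lra.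
have Kc : `|c| < K by rewrite /K; have := normr_ge0 b; lra.
have Kb : `|b| < 4 * K by rewrite /K; have := normr_ge0 c; have := normr_ge0 b; lra.
have := H (c / (2 * K)).
have hr : -1/2 <= c / (2 * K) <= 1/2.
  have : `|c / (2 * K)| <= 1/2.
    rewrite normrM normfV (ger0_norm (_ : 0 <= 2 * K)); last lra.
    rewrite ler_pdivrMr; last lra.
    lra.
  by rewrite ler_norml mulNr.
move=> /(_ hr).
have -> : 2 * (c / (2 * K)) * c + (c / (2 * K)) ^+ 2 * b
    = c ^+ 2 / (4 * K ^+ 2) * (4 * K + b).
  by field; rewrite gt_eqF.
apply/negP; rewrite -ltNge; apply: mulr_gt0.
  apply: divr_gt0; first by rewrite exprn_even_gt0.
  by apply: mulr_gt0; [lra| exact: exprn_gt0].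
have := ler_norm (- b); rewrite normrN; lra.
Qed.


Section Opt.
Variables (R : realType) (n : nat) (adj : rel 'I_n).
Hypothesis adj_irr : irreflexive adj.
Implicit Types (X : 'M[R]_n) (u v d : 'cV[R]_n).
Local Notation e := (ones R n).
Variable W : 'M[R]_n.
Hypothesis FW : Fset adj W.
Hypothesis Wmax : forall W', Fset adj W' -> sm W' <= sm W.
Local Notation T := (sm W).

Let pW : psd W. Proof. by case: FW. Qed.
Let nW : nonneg_mx W. Proof. by case: FW. Qed.
Let eW : forall i j, adj i j -> W i j = 0. Proof. by case: FW. Qed.
Let tW : \tr W = 1. Proof. by case: FW. Qed.
Let sW : W^T = W. Proof. by case: pW. Qed.
Let Wsym a b : W b a = W a b. Proof. by rewrite -[in RHS]sW mxE. Qed.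

Definition Wh d : 'M[R]_n := \matrix_(a, b) (d a 0 * W a b * d b 0).
Definition tau d : R := \sum_a d a 0 ^+ 2 * W a a.

Lemma scale_ineq d : (forall a, 0 <= d a 0) -> 0 < tau d -> qf W d d <= T * tau d.
Proof.
move=> d0 tpos.
have qWh v : qf (Wh d) v v = qf W (\col_a (d a 0 * v a 0)) (\col_a (d a 0 * v a 0)).
  rewrite !qf_sum; apply: eq_bigr => a _; apply: eq_bigr => b _; rewrite !mxE; ring.
have F' : Fset adj ((tau d)^-1 *: Wh d).
  split.
  - split.
      by apply/matrixP => a b; rewrite !mxE Wsym; ring.
    move=> v; change (0 <= qf ((tau d)^-1 *: Wh d) v v); rewrite qfZm qWh.
    apply: mulr_ge0; first by rewrite invr_ge0 ltW.
    exact: psd_qf.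
  - move=> a b; rewrite !mxE; apply: mulr_ge0; first by rewrite invr_ge0 ltW.
    by apply: mulr_ge0 => //; apply: mulr_ge0.
  - by move=> a b ab; rewrite !mxE (eW ab); ring.
  - rewrite trE.
    have -> : \sum_a ((tau d)^-1 *: Wh d) a a = (tau d)^-1 * tau d.
      rewrite /tau mulr_sumr; apply: eq_bigr => a _; rewrite !mxE; ring.
    by rewrite mulVf // gt_eqF.
have := Wmax F'; rewrite /sm qfZm.
have -> : qf (Wh d) e e = qf W d d.
  rewrite !qf_sum; apply: eq_bigr => a _; apply: eq_bigr => b _; rewrite !mxE; ring.
move=> H.
have -> : qf W d d = tau d * ((tau d)^-1 * qf W d d) by field; rewrite gt_eqF.
by rewrite mulrC ler_pM2r.
Qed.

Lemma qf_delta_e i : qf W (delta_mx i 0) e = (W *m e) i 0.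
Proof. by rewrite /qf trmx_delta -mulmxA -rowE mxE. Qed.

Lemma first_order : W *m e = T *: diagv W.
Proof.
apply/matrixP => i k; rewrite ord1 [in RHS]mxE [diagv W i 0]mxE.
set r := (W *m e) i 0; set w := W i i.
suff : r - T * w = 0 by lra.
apply: (@fo_real R _ (w - T * w)) => h /andP[h1 h2].
pose d : 'cV[R]_n := e + h *: delta_mx i 0.
have dE a : d a 0 = 1 + h * (a == i)%:R.
  by rewrite /d !mxE andbT.
have taue : tau d = 1 + (2 * h + h ^+ 2) * w.
  rewrite /tau.
  transitivity (\sum_a (W a a + (a == i)%:R * ((2 * h + h ^+ 2) * W a a))).
    apply: eq_bigr => a _; rewrite dE; case: eqP => _ /=; ring.
  by rewrite big_split /= sum_delta -trE tW.
have qe : qf W d d = T + 2 * h * r + h ^+ 2 * w.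
  rewrite /d !(qfDl, qfDr, qfZl, qfZr) qf_delta qf_delta_e (qf_sym _ _ sW) qf_delta_e.
  rewrite /r /w /sm; ring.
have d0 a : 0 <= d a 0 by rewrite dE; case: eqP => _ /=; lra.
have w0 : 0 <= w by exact: psd_diag.
have w1 : w <= 1 by rewrite -tW; exact: diag_le_tr.
have tpos : 0 < tau d.
  rewrite taue; have : 0 <= (h + 1/2) * (1/2 - h) by apply: mulr_ge0; lra.
  nra.
have := scale_ineq d0 tpos; rewrite qe taue => H.
have -> : 2 * h * (r - T * w) + h ^+ 2 * (w - T * w) =
   (T + 2 * h * r + h ^+ 2 * w) - T * (1 + (2 * h + h ^+ 2) * w) by ring.
by rewrite subr_le0.
Qed.
End Opt.


Section Opt2.
Variables (R : realType) (n : nat) (adj : rel 'I_n).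
Hypothesis adj_irr : irreflexive adj.
Implicit Types (X : 'M[R]_n) (u v d : 'cV[R]_n).
Local Notation e := (ones R n).
Variable W : 'M[R]_n.
Hypothesis FW : Fset adj W.
Hypothesis Wmax : forall W', Fset adj W' -> sm W' <= sm W.
Local Notation T := (sm W).

Let pW : psd W. Proof. by case: FW. Qed.
Let nW : nonneg_mx W. Proof. by case: FW. Qed.
Let eW : forall i j, adj i j -> W i j = 0. Proof. by case: FW. Qed.
Let tW : \tr W = 1. Proof. by case: FW. Qed.
Let sW : W^T = W. Proof. by case: pW. Qed.
Let Wsym a b : W b a = W a b. Proof. by rewrite -[in RHS]sW mxE. Qed.
Let WeT : W *m e = T *: diagv W. Proof. exact: (first_order FW Wmax). Qed.

Lemma T_ge1 : (0 < n)%N -> 1 <= T.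
Proof. by move=> hn; rewrite -(sm_delta R (Ordinal hn)); apply: Wmax; exact: F_delta. Qed.

Lemma T_le_n : T <= n%:R.
Proof. by have := sm_le pW; rewrite tW mulr1. Qed.

Lemma frob_sum X : frob (adjmx R adj) X = \sum_a \sum_b (adj b a)%:R * X b a.
Proof.
rewrite /frob trE; apply: eq_bigr => a _; rewrite mxE.
by apply: eq_bigr => b _; rewrite !mxE.
Qed.

Lemma construct (t : R) : 1 <= t <= T ->
  exists Z, @feasQ R n t Z /\ frob (adjmx R adj) Z = 0.
Proof.
move=> /andP[t1 tT].
have T1 : 1 <= T by lra.
pose s := (t - 1) / (T - 1).
have s01 : 0 <= s <= 1.
  have [TE|TN] := eqVneq T 1.
    by rewrite /s TE subrr invr0 mulr0 lexx ler01.
  have Tp : 0 < T - 1.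
    by rewrite subr_gt0 lt_neqAle eq_sym TN T1.
  apply/andP; split; first by apply: divr_ge0; lra.
  by rewrite ler_pdivrMr //; lra.
have sT : 1 - s + s * T = t.
  have [TE|TN] := eqVneq T 1.
    have -> : t = 1 by lra.
    by rewrite /s TE subrr invr0 !mulr0 subr0 mul0r addr0.
  have TN' : T - 1 != 0 by rewrite subr_eq0.
  by rewrite /s; field.
pose Dw : 'M[R]_n := \matrix_(a, b) ((a == b)%:R * W a b).
pose Z : 'M[R]_n := t *: ((1 - s) *: Dw + s *: W).
have ZE a b : Z a b = t * ((1 - s) * ((a == b)%:R * W a b) + s * W a b).
  by rewrite !mxE.
have t0 : 0 <= t by lra.
have s0 : 0 <= s by case/andP: s01.
have s1 : 0 <= 1 - s by case/andP: s01 => _; lra.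
exists Z; split; last first.
  rewrite frob_sum; apply: big1 => a _; apply: big1 => b _.
  case ba: (adj b a); last by rewrite mul0r.
  by rewrite ZE (eW ba); ring.
have sZ : Z^T = Z.
  by apply/matrixP => a b; rewrite mxE !ZE Wsym eq_sym.
split => //.
- split => // v; change (0 <= qf Z v v).
  rewrite qfZm qfDm !qfZm; apply: mulr_ge0 => //.
  apply: addr_ge0; apply: mulr_ge0 => //; last exact: psd_qf.
  rewrite qf_sum; apply: sumr_ge0 => a _.
  rewrite (bigD1 a) //= big1 => [|b ba]; last first.
    by rewrite mxE eq_sym (negbTE ba) mul0r mulr0.
  rewrite mxE eqxx mul1r addr0; apply: mulr_ge0; last exact: psd_diag.
  by rewrite -expr2 sqr_ge0.
- move=> a b; rewrite ZE; apply: mulr_ge0 => //; apply: addr_ge0; apply: mulr_ge0 => //.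
  by apply: mulr_ge0 => //; rewrite ler0n.
- rewrite trE.
  transitivity (\sum_a t * W a a).
    by apply: eq_bigr => a _; rewrite ZE eqxx /=; ring.
  by rewrite -mulr_sumr -trE tW mulr1.
- apply/matrixP => a k; rewrite ord1 mulmx_onesE.
  transitivity (t * ((1 - s) * W a a + s * (W *m e) a 0)).
    rewrite mulmx_onesE mulr_sumr.
    under eq_bigr do rewrite ZE.
    rewrite -!mulr_sumr big_split /= -!mulr_sumr.
    congr (_ * (_ + _)).
    congr (_ * _); rewrite (bigD1 a) //= eqxx mul1r big1 ?addr0 // => b ba.
    by rewrite eq_sym (negbTE ba) mul0r.
  rewrite WeT !mxE eqxx.
  rewrite /= mul1r -{2}sT; ring.
Qed.
End Opt2.


Section Opt3.
Variables (R : realType) (n : nat) (adj : rel 'I_n).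
Hypothesis adj_irr : irreflexive adj.
Hypothesis hn : (0 < n)%N.
Implicit Types (X : 'M[R]_n) (u v d : 'cV[R]_n).
Local Notation e := (ones R n).
Variable W : 'M[R]_n.
Hypothesis FW : Fset adj W.
Hypothesis Wmax : forall W', Fset adj W' -> sm W' <= sm W.
Local Notation T := (sm W).

Let pW : psd W. Proof. by case: FW. Qed.
Let nW : nonneg_mx W. Proof. by case: FW. Qed.
Let eW : forall i j, adj i j -> W i j = 0. Proof. by case: FW. Qed.
Let tW : \tr W = 1. Proof. by case: FW. Qed.
Let sW : W^T = W. Proof. by case: pW. Qed.
Let WeT : W *m e = T *: diagv W. Proof. exact: (first_order FW Wmax). Qed.
Let T1 : 1 <= T. Proof. exact: (T_ge1 adj_irr Wmax hn). Qed.

Lemma psd_scale (c : R) X : 0 <= c -> psd X -> psd (c *: X).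
Proof.
move=> c0 [sX qX]; split; first by rewrite linearZ /= sX.
by move=> v; change (0 <= qf (c *: X) v v); rewrite qfZm; apply: mulr_ge0 => //; exact: qX.
Qed.

Lemma trZ (c : R) X : \tr (c *: X) = c * \tr X.
Proof. by rewrite !trE mulr_sumr; apply: eq_bigr => a _; rewrite mxE. Qed.

Lemma ones_sum v : (e^T *m v) 0 0 = \sum_a v a 0.
Proof. by rewrite mxE; apply: eq_bigr => a _; rewrite mxE onesE mul1r. Qed.

Lemma ones_sum2 v : (v^T *m e) 0 0 = \sum_a v a 0.
Proof. by rewrite tr_sq ones_sum. Qed.

Lemma theta_ub p : feasTheta adj p -> \tr p.1 <= T.
Proof.
case: p => Y y [/= pM dY eY nY].
set M := Y - y *m y^T in pM.
have YE : Y = M + y *m y^T by rewrite /M subrK.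
have sM : M^T = M by case: pM.
have sY : Y^T = Y by rewrite YE linearD /= sM trmx_mul trmxK.
have pY : psd Y.
  split => // v; change (0 <= qf Y v v); rewrite YE qfDm.
  by apply: addr_ge0; [exact: psd_qf | exact: psd_qf (psd_outer y)].
set tau := \tr Y.
have tauE : tau = \sum_a y a 0.
  rewrite /tau trE; apply: eq_bigr => a _.
  by have := congr1 (fun N : 'cV[R]_n => N a 0) dY; rewrite mxE.
have smY : tau * tau <= sm Y.
  rewrite /sm YE qfDm qf_outer tr_sq ones_sum2 -tauE lerDr.
  exact: psd_qf.
have [tle|tgt] := lerP tau 0; first by have := T1; lra.
have F' : Fset adj (tau^-1 *: Y).
  split.
  - by apply: psd_scale => //; rewrite invr_ge0 ltW.
  - by move=> a b; rewrite mxE; apply: mulr_ge0 => //; rewrite invr_ge0 ltW.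
  - by move=> a b ab; rewrite mxE (eY _ _ ab) mulr0.
  - by rewrite trZ mulVf // gt_eqF.
have := Wmax F'; rewrite /sm qfZm -/(sm Y) => H.
have : tau <= tau^-1 * sm Y.
  rewrite -(ler_pM2l tgt) mulrA mulfV ?gt_eqF // mul1r; exact: smY.
lra.
Qed.

Lemma theta_attained : feasTheta adj (T *: W, W *m e).
Proof.
have T0 : 0 <= T by have := T1; lra.
split => /=.
- split.
    by rewrite linearB /= linearZ /= sW trmx_mul trmxK.
  move=> v; change (0 <= qf (T *: W - (W *m e) *m (W *m e)^T) v v).
  rewrite qfDm qfNm qfZm qf_outer (tr_sq v (W *m e)).
  have -> : (v^T *m (W *m e)) 0 0 = qf W v e by rewrite /qf mulmxA.
  have := psd_CS v e pW; rewrite -/(sm W) => H.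
  rewrite subr_ge0 -expr2 mulrC; exact: H.
- by rewrite WeT; apply/matrixP => a k; rewrite !mxE.
- by move=> a b ab; rewrite mxE eW // mulr0.
- by move=> a b; rewrite mxE; apply: mulr_ge0.
Qed.

Lemma theta_eq : theta_plus R adj = T.
Proof.
have ne : [set \tr p.1 | p in @feasTheta R n adj] !=set0.
  by exists T; exists (T *: W, W *m e); [exact: theta_attained | rewrite /= trZ tW mulr1].
have ub : ubound [set \tr p.1 | p in @feasTheta R n adj] T.
  by move=> _ [p fp <-]; exact: theta_ub.
apply/eqP; rewrite eq_le; apply/andP; split; first exact: ge_sup.
apply: sup_upper_bound; first by split => //; exists T.
by exists (T *: W, W *m e); [exact: theta_attained | rewrite /= trZ tW mulr1].
Qed.
End Opt3.


Lemma sum_lt_nat (m j : nat) : (\sum_(0 <= a < m) (a < j) = minn m j)%N.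
Proof.
elim: m => [|m IH]; first by rewrite big_geq // min0n.
rewrite big_nat_recr //= IH.
case: (ltnP m j) => h /=; lia.
Qed.

Lemma sum_u (R : realType) (n j : nat) : (j <= n)%N ->
  \sum_(a < n) ((a < j)%N)%:R = j%:R :> R.
Proof.
move=> hj; rewrite -natr_sum; congr (_ %:R).
transitivity (\sum_(0 <= a < n) (a < j))%N; first by rewrite big_mkord.
rewrite sum_lt_nat; lia.
Qed.

Section Dir2.
Variables (R : realType) (n : nat) (adj : rel 'I_n).
Implicit Types (X : 'M[R]_n) (u v d : 'cV[R]_n).
Local Notation e := (ones R n).

Lemma outerE u a b : (u *m u^T) a b = u a 0 * u b 0.
Proof. by rewrite mxE big_ord1 !mxE. Qed.

Lemma feasQ_ne (j : nat) : (j <= n)%N -> exists X, @feasQ R n j%:R X.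
Proof.
move=> hj; pose u : 'cV[R]_n := \col_a ((a < j)%N)%:R.
have uE a : u a 0 = ((a < j)%N)%:R by rewrite mxE.
have uu a : u a 0 * u a 0 = u a 0 by rewrite uE; case: (a < j)%N => /=; ring.
have su : \sum_a u a 0 = j%:R by rewrite -(sum_u R hj); apply: eq_bigr => a _; rewrite uE.
exists (u *m u^T); split.
- by rewrite trmx_mul trmxK.
- exact: psd_outer.
- by move=> a b; rewrite outerE !uE; apply: mulr_ge0; rewrite ler0n.
- by rewrite trE -su; apply: eq_bigr => a _; rewrite outerE uu.
- apply/matrixP => a k; rewrite ord1 mulmx_onesE !mxE.
  transitivity (u a 0 * \sum_b u b 0).
    by rewrite mulr_sumr; apply: eq_bigr => b _; rewrite outerE.
  rewrite su big_ord1 !mxE; case: (a < j)%N => /=; ring.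
Qed.

Definition obj X : R := 2%:R^-1 * frob (adjmx R adj) X.

Lemma obj_ge0 X : nonneg_mx X -> 0 <= obj X.
Proof.
move=> nX; rewrite /obj frob_sum; apply: mulr_ge0; first by rewrite invr_ge0 ler0n.
apply: sumr_ge0 => a _; apply: sumr_ge0 => b _; apply: mulr_ge0 => //.
Qed.

Lemma cont_obj : continuous obj.
Proof.
have -> : obj = (fun X => 2%:R^-1 * \sum_b \sum_a (adj b a)%:R * X b a).
  by apply/funext => X; rewrite /obj frob_sum exchange_big.
move=> X; apply: (@continuousM _ _ (fun=> 2%:R^-1) (fun X : 'M[R]_n => \sum_b \sum_a (adj b a)%:R * X b a)).
  exact: cst_continuous.
exact: cont_lin.
Qed.

Lemma Sval0_min (j : nat) : (j <= n)%N -> @Sval R n adj j%:R = 0 ->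
  exists X, @feasQ R n j%:R X /\ forall a b, adj a b -> X a b = 0.
Proof.
move=> hj S0.
have ne : @feasQ R n j%:R !=set0 by have [X HX] := feasQ_ne hj; exists X.
have cpt : compact (@feasQ R n j%:R).
  apply: (@mx_compact R n _ j%:R (@closed_Q R n j%:R)) => X [_ pX nX tX _] a b.
  by rewrite -tX; exact: entry_bound.
have [X QX Xmin] := compact_EVT_min ne cpt (continuous_subspaceT cont_obj).
rewrite inE in QX; exists X; split => //.
have nX : nonneg_mx X by case: QX.
have o0 : obj X = 0.
  apply/eqP; rewrite eq_le obj_ge0 // andbT -S0.
  apply: lb_le_inf; first by exists (obj X); exists X.
  by move=> _ [Y QY <-]; apply: Xmin; rewrite inE.
move: o0; rewrite /obj frob_sum => /eqP; rewrite mulf_eq0 invr_eq0 pnatr_eq0 /= => /eqP H.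
move=> a b ab.
have H1 := psumr_eq0P (fun b _ => sumr_ge0 _ (fun a _ => mulr_ge0 (ler0n _ _) (nX a b))) H.
have H2 := psumr_eq0P (fun i _ => mulr_ge0 (ler0n _ _) (nX i b)) (H1 b isT).
by have := H2 a isT; rewrite ab mul1r.
Qed.
End Dir2.


Lemma dir2 (R : realType) (n : nat) (adj : rel 'I_n) (W : 'M[R]_n)
  (Wmax : forall W', Fset adj W' -> sm W' <= sm W) (j : nat) :
  (0 < j <= n)%N -> @Sval R n adj j%:R = 0 -> j%:R <= sm W.
Proof.
move=> /andP[j0 jn] S0.
have [X [[sX pX nX tX eX] edX]] := Sval0_min jn S0.
have jp : 0 < j%:R :> R by rewrite ltr0n.
have F' : Fset adj ((j%:R)^-1 *: X).
  split.
  - by apply: psd_scale => //; rewrite invr_ge0 ltW.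
  - by move=> a b; rewrite mxE; apply: mulr_ge0 => //; rewrite invr_ge0 ltW.
  - by move=> a b ab; rewrite mxE (edX _ _ ab) mulr0.
  - by rewrite trZ tX mulVf // gt_eqF.
have := Wmax _ F'; rewrite /sm qfZm -/(sm X).
have -> : sm X = j%:R * j%:R.
  rewrite sm_sum.
  transitivity (\sum_a (X *m ones R n) a 0).
    by apply: eq_bigr => a _; rewrite mulmx_onesE.
  rewrite eX; transitivity (\sum_a j%:R * X a a).
    by apply: eq_bigr => a _; rewrite !mxE.
  by rewrite -mulr_sumr -trE tX.
by rewrite mulrA mulVf ?gt_eqF // mul1r.
Qed.

Theorem mainTheorem13 (R : realType) (n : nat) (adj : rel 'I_n)
    (adj_sym : symmetric adj) (adj_irr : irreflexive adj) (hn : (1 <= n)%N) :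
  exists k : nat,
    [/\ (1 <= k <= n)%N,
        @Sval R n adj k%:R = 0,
        (forall j : nat, (1 <= j <= n)%N -> @Sval R n adj j%:R = 0 -> (j <= k)%N)
      & (k%:Z = Num.floor (@theta_plus R n adj))%R].
Proof.
have [W FW Wmax] := exists_max R adj_irr hn.
set T := sm W.
have T1 : 1 <= T := T_ge1 adj_irr Wmax hn.
have Tn : T <= n%:R := T_le_n FW.
have thE : theta_plus R adj = T := theta_eq adj_irr hn FW Wmax.
set fl := Num.floor T.
have fl0 : 0 <= fl by rewrite floor_ge0; lra.
exists `|fl|%N.
have hk : (`|fl|%N)%:Z = fl by rewrite abszE ger0_norm.
have flR : ((`|fl|%N)%:R : R) = fl%:~R by rewrite -hk.
have kT : ((`|fl|%N)%:R : R) <= T by rewrite flR floor_le.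
have k1 : (1 <= `|fl|%N)%N.
  by rewrite -(lez_nat 1) hk floor_ge_int.
split.
- rewrite k1 /=; rewrite -(lez_nat _ n) hk.
  rewrite -ltzD1 floor_lt_int; rewrite intrD.
  have : (n%:Z)%:~R = n%:R :> R by [].
  lra.
- have hkT : 1 <= ((`|fl|%N)%:R : R) <= T by rewrite kT ler1n k1.
  have [Z [QZ fZ]] := construct FW Wmax hkT.
  have hl : has_lbound [set 2%:R^-1 * frob (adjmx R adj) X | X in @feasQ R n (`|fl|%N)%:R].
    by exists 0 => _ [X [_ _ nX _ _] <-]; exact: (obj_ge0 adj nX).
  rewrite /Sval; apply/eqP; rewrite eq_le; apply/andP; split.
    have H := ge_inf hl.
    have : inf [set 2%:R^-1 * frob (adjmx R adj) X | X in @feasQ R n (`|fl|%N)%:R]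
       <= 2%:R^-1 * frob (adjmx R adj) Z by apply: H; exists Z.
    by rewrite fZ mulr0.
  apply: lb_le_inf; first by exists (2%:R^-1 * frob (adjmx R adj) Z); exists Z.
  by move=> _ [X [_ _ nX _ _] <-]; exact: (obj_ge0 adj nX).
- move=> j /andP[j1 jn] Sj.
  have := dir2 Wmax (j := j) _ Sj; rewrite j1 jn => /(_ isT) jT.
  by rewrite -(lez_nat j) hk floor_ge_int.
- by rewrite hk thE.
Qed.
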